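(* For any non-trivial non-empty graphs $G$ and $H$, $$\alpha(G\times H)\ge \mu(H)\,\alpha(G\times K_2)=\mu(H)\,\mu(G\times K_2)\ge 2\,\mu(G)\,\mu(H).$$
   Context: Graphs are finite, simple, undirected; non-trivial means at least two vertices and non-empty means at least one edge. $\alpha(F)$ is the vertex cover number (minimum size of a vertex set meeting every edge) and $\mu(F)$ the matching number (maximum size of a matching) of $F$. $K_2$ is the complete graph on two vertices. The direct product $G\times H$ has vertex set $V(G)\times V(H)$, with $(a,b)$ adjacent to $(c,d)$ iff $ac\in E(G)$ and $bd\in E(H)$. *)

(* Defs.v *)
From mathcomp Require Import all_boot.
Set Implicit Arguments. Unset Strict Implicit. Unset Printing Implicit Defensive.

Definition simple_graph (T : finType) (e : rel T) : Prop :=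
  symmetric e /\ irreflexive e.

Definition nontrivial_graph (T : finType) : Prop := 1 < #|T|.
Definition nonempty_graph (T : finType) (e : rel T) : Prop := exists x y, e x y.

(* vertex covers and vertex cover number alpha(F) = min size of a cover
   (the full vertex set is always a cover, so #|T| is an upper bound) *)
Definition is_vertex_cover (T : finType) (e : rel T) (S : {set T}) : bool :=
  [forall x, forall y, e x y ==> (x \in S) || (y \in S)].

Definition vertex_cover_number (T : finType) (e : rel T) : nat :=
  \big[minn/#|T|]_(S : {set T} | is_vertex_cover e S) #|S|.

Definition is_edge (T : finType) (e : rel T) (f : {set T}) : bool :=
  [exists x, exists y, e x y && (f == [set x; y])].

Definition is_matching (T : finType) (e : rel T) (M : {set {set T}}) : bool :=
  [forall f in M, is_edge e f] &&
  [forall f in M, forall g in M, (f != g) ==> [disjoint f & g]].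

Definition matching_number (T : finType) (e : rel T) : nat :=
  \max_(M : {set {set T}} | is_matching e M) #|M|.

Definition direct_prod (T U : finType) (eG : rel T) (eH : rel U) : rel (T * U) :=
  fun p q => eG p.1 q.1 && eH p.2 q.2.

Definition K2 : rel bool := fun a b => a != b.

(* Main.v *)
Require Import Defs.
From mathcomp Require Import all_boot zify.
Set Implicit Arguments. Unset Strict Implicit. Unset Printing Implicit Defensive.

Section Gen.
Variables (T : finType) (e : rel T).

Lemma coverP (S : {set T}) : reflect (forall x y, e x y -> (x \in S) || (y \in S))
  (is_vertex_cover e S).
Proof.
apply: (iffP forallP) => H.
  by move=> x y exy; move/forallP: (H x) => /(_ y); rewrite exy.
by move=> x; apply/forallP => y; apply/implyP; apply: H.
Qed.

Lemma vcn_le (S : {set T}) : is_vertex_cover e S -> vertex_cover_number e <= #|S|.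
Proof.
move=> cS; rewrite /vertex_cover_number.
have: S \in index_enum {set T} by rewrite mem_index_enum.
elim: (index_enum _) => [//|a r IH]; rewrite inE big_cons => /predU1P [<-|Sr].
  by rewrite cS geq_minl.
by case: ifP => _; [rewrite geq_min IH ?orbT|exact: IH].
Qed.

Lemma vcn_attained : exists2 S, is_vertex_cover e S & #|S| <= vertex_cover_number e.
Proof.
rewrite /vertex_cover_number.
elim/big_ind: _.
- exists setT; last by rewrite cardsT.
  by apply/coverP => x y _; rewrite in_setT.
- move=> m n [S1 c1 l1] [S2 c2 l2].
  case: (leqP m n) => mn.
  + by exists S1 => //; rewrite (minn_idPl mn).
  + by exists S2 => //; rewrite (minn_idPr (ltnW mn)).
- by move=> S cS; exists S.
Qed.

Lemma mn_ge (M : {set {set T}}) : is_matching e M -> #|M| <= matching_number e.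
Proof. by move=> mM; apply: leq_bigmax_cond. Qed.

Lemma matching0 : is_matching e set0.
Proof. by apply/andP; split; apply/forall_inP => f; rewrite in_set0. Qed.

Lemma mn_attained : exists2 M, is_matching e M & matching_number e = #|M|.
Proof.
exists [arg max_(M > set0 | is_matching e M) #|M|].
  by case: arg_maxnP => //; apply: matching0.
by rewrite /matching_number (bigmax_eq_arg set0) //; apply: matching0.
Qed.

Lemma edgeP (f : {set T}) : reflect (exists x y, e x y /\ f = [set x; y]) (is_edge e f).
Proof.
apply: (iffP existsP) => [[x /existsP [y /andP [exy /eqP ->]]]|[x [y [exy ->]]]].
  by exists x, y.
by exists x; apply/existsP; exists y; rewrite exy eqxx.
Qed.

Lemma matchingP (M : {set {set T}}) : reflect
  ((forall f, f \in M -> is_edge e f) /\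
   (forall f g, f \in M -> g \in M -> f != g -> [disjoint f & g]))
  (is_matching e M).
Proof.
apply: (iffP andP) => [[/forall_inP H1 /forall_inP H2]|[H1 H2]].
  split => // f g fM gM nfg.
  by move/forall_inP: (H2 f fM) => /(_ g gM) /implyP; apply.
split; apply/forall_inP => // f fM; apply/forall_inP => g gM; apply/implyP.
exact: H2.
Qed.

Lemma cover_matching (S : {set T}) (M : {set {set T}}) : is_vertex_cover e S -> is_matching e M -> #|M| <= #|S|.
Proof.
move=> /coverP cS /matchingP [eM dM].
pose h (f : {set T}) := [pick v in f :&: S].
have hS f : f \in M -> exists2 v, h f = Some v & v \in f :&: S.
  move=> fM; rewrite /h; case: pickP => [v vin|]; first by exists v.
  case/edgeP: (eM f fM) => x [y [exy ->]] /=.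
  case/orP: (cS x y exy) => [xS|yS].
    by move/(_ x); rewrite !inE eqxx xS.
  by move/(_ y); rewrite !inE eqxx yS orbT.
have hinj : {in M &, injective h}.
  move=> f g fM gM hfg; apply/eqP; apply/negPn/negP => nfg.
  case: (hS f fM) => v hv; case: (hS g gM) => w hw.
  rewrite -hfg hv in hw; case: hw => <-; rewrite !inE => /andP [vg _] /andP [vf _].
  by move/disjointFr: (dM f g fM gM nfg) => /(_ v vf); rewrite vg.
rewrite -(card_in_imset hinj) -(card_imset S (@Some_inj _)).
apply: subset_leq_card; apply/subsetP => o /imsetP [f fM ->].
case: (hS f fM) => v -> /setIP [_ vS]; exact: imset_f.
Qed.

End Gen.

Section Hall.
Variables (T1 T2 : finType).

Definition NB (N : T1 -> {set T2}) (X : {set T1}) := \bigcup_(x in X) N x.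

Lemma NB_mono N (X Y : {set T1}) : X \subset Y -> NB N X \subset NB N Y.
Proof.
move=> sXY; apply/subsetP => y /bigcupP [x xX yN].
by apply/bigcupP; exists x => //; apply: (subsetP sXY).
Qed.

Lemma NBU N (X Y : {set T1}) : NB N (X :|: Y) = NB N X :|: NB N Y.
Proof. exact: bigcup_setU. Qed.

Lemma NBD N (B : {set T2}) (X : {set T1}) :
  NB (fun x => N x :\: B) X = NB N X :\: B.
Proof.
apply/setP => y; apply/bigcupP/setDP.
  move=> [x xX /setDP [yN yB]]; split => //; apply/bigcupP; by exists x.
move=> [/bigcupP [x xX yN] yB]; exists x => //; exact/setDP.
Qed.

Lemma NB1 N x : NB N [set x] = N x.
Proof. by rewrite /NB big_set1. Qed.

Lemma cardUD (B C : {set T2}) : #|B :|: C| = #|B| + #|C :\: B|.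
Proof.
rewrite -(cardsID B (B :|: C)) setUK setDUl setDv set0U //.
Qed.

Theorem hall (y0 : T2) (N : T1 -> {set T2}) (A : {set T1}) :
  (forall X : {set T1}, X \subset A -> #|X| <= #|NB N X|) ->
  exists f : T1 -> T2, {in A &, injective f} /\ {in A, forall x, f x \in N x}.
Proof.
have [n] := ubnP #|A|; elim: n A N => // n IH A N ltA hall.
case: (set_0Vmem A) => [-> | [a aA]].
  by exists (fun _ => y0); split => x; rewrite in_set0.
case: (boolP [exists X : {set T1}, [&& X \proper A, X != set0 & #|NB N X| <= #|X|]]).
- case/existsP => X /and3P [pXA nX0 tX].
  have sXA : X \subset A by exact: proper_sub.
  have ltX : #|X| < #|A| by exact: proper_card.
  have [f1 [f1i f1N]] : exists f : T1 -> T2,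
      {in X &, injective f} /\ {in X, forall x, f x \in N x}.
    apply: IH; first by lia.
    by move=> Y sYX; apply: hall; apply: subset_trans sXA.
  pose N' x := N x :\: NB N X.
  have [f2 [f2i f2N]] : exists f : T1 -> T2,
      {in A :\: X &, injective f} /\ {in A :\: X, forall x, f x \in N' x}.
    apply: IH.
      have := cardsID X A; rewrite (setIidPr sXA).
      have : 0 < #|X| by rewrite card_gt0.
      lia.
    move=> Y sY; rewrite /N' NBD.
    have dXY : [disjoint X & Y].
      rewrite disjoint_sym; apply/pred0P => y /=.
      apply/negP => /andP [yY yX].
      by move/subsetP: sY => /(_ y yY) /setDP [_]; rewrite yX.
    have := hall (X :|: Y); rewrite subUset sXA (subset_trans sY) ?subsetDl //.
    move=> /(_ isT); rewrite NBU cardUD.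
    have := leq_card_setU X Y; rewrite dXY => -[_ /eqP ->].
    lia.
  exists (fun x => if x \in X then f1 x else f2 x); split.
    move=> x y xA yA /=.
    case: (boolP (x \in X)) => xX; case: (boolP (y \in X)) => yX.
    + exact: f1i.
    + move=> exy; have := f2N y; rewrite inE yX yA => /(_ isT) /setDP [_].
      rewrite -exy; case/negP; apply/bigcupP; exists x => //; exact: f1N.
    + move=> exy; have := f2N x; rewrite inE xX xA => /(_ isT) /setDP [_].
      rewrite exy; case/negP; apply/bigcupP; exists y => //; exact: f1N.
    + by apply: f2i; rewrite inE ?xX ?yX.
  move=> x xA /=; case: ifP => xX; first exact: f1N.
  by have := f2N x; rewrite inE xX xA => /(_ isT) /setDP [].
- move=> nt.
  have nt' : forall X : {set T1}, X \proper A -> X != set0 -> #|X| < #|NB N X|.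
    move=> X pX nX; rewrite ltnNge; apply/negP => le.
    by case/negP: nt; apply/existsP; exists X; rewrite pX nX le.
  have : 0 < #|N a|.
    by have := hall [set a]; rewrite sub1set aA NB1 cards1 => /(_ isT).
  case/card_gt0P => b bN.
  pose N' x := N x :\ b.
  have [f2 [f2i f2N]] : exists f : T1 -> T2,
      {in A :\ a &, injective f} /\ {in A :\ a, forall x, f x \in N' x}.
    apply: IH.
      by have := cardsD1 a A; rewrite aA; lia.
    move=> Y sY; rewrite /N' NBD.
    case: (set_0Vmem Y) => [-> | [y yY]]; first by rewrite cards0.
    have sYA : Y \subset A by apply: subset_trans sY (subsetDl _ _).
    have pY : Y \proper A.
      rewrite properE sYA /=; apply/negP => /subsetP /(_ a aA) aY.
      by move/subsetP: sY => /(_ a aY); rewrite !inE eqxx.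
    have := nt' Y pY.
    have -> : (Y != set0) by apply/set0Pn; exists y.
    move=> /(_ isT) lt.
    have := cardsD1 b (NB N Y); case: (b \in NB N Y) => /=; lia.
  exists (fun x => if x == a then b else f2 x); split.
    move=> x y xA yA /=.
    case: (eqVneq x a) => [-> | xa]; case: (eqVneq y a) => [-> | ya] //.
    + move=> eb; have := f2N y; rewrite !inE ya yA => /(_ isT).
      by rewrite -eb eqxx.
    + move=> eb; have := f2N x; rewrite !inE xa xA => /(_ isT).
      by rewrite eb eqxx.
    + by apply: f2i; rewrite !inE ?xa ?ya.
  move=> x xA /=; case: eqVneq => [-> // | xa].
  by have := f2N x; rewrite !inE xa xA => /(_ isT) /andP [].
Qed.

End Hall.

Theorem konig (T : finType) (y0 : T) (e : rel T) :
  exists L R : {set T}, exists P : {set T * T},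
    [/\ forall x y, e x y -> (x \in L) || (y \in R),
        forall p, p \in P -> e p.1 p.2,
        {in P &, injective fst}, {in P &, injective snd}
      & #|L| + #|R| <= #|P|].
Proof.
pose N x := [set y | e x y].
pose g (X : {set T}) := #|X| + #|~: NB N X|.
pose X0 := [arg max_(X > set0) g X].
have X0max : forall X, g X <= g X0.
  by move=> X; rewrite /X0; case: arg_maxnP => // Z _ H; apply: H.
have cT (S : {set T}) : #|S| <= #|T| by rewrite max_card.
have [f1 [f1i f1N]] : exists f : T -> T,
    {in ~: X0 &, injective f} /\ {in ~: X0, forall x, f x \in N x :\: NB N X0}.
  apply: hall => // Y sY; rewrite NBD.
  have dXY : [disjoint X0 & Y].
    rewrite disjoint_sym; apply/pred0P => y /=.
    apply/negP => /andP [yY yX].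
    by move/subsetP: sY => /(_ y yY); rewrite inE yX.
  have := X0max (X0 :|: Y); rewrite /g NBU.
  have := cardsC (NB N X0 :|: NB N Y); have := cardsC (NB N X0).
  rewrite cardUD.
  have := leq_card_setU X0 Y; rewrite dXY => -[_ /eqP ->].
  lia.
pose N2 b := [set x in X0 | e x b].
have [f2 [f2i f2N]] : exists f : T -> T,
    {in NB N X0 &, injective f} /\ {in NB N X0, forall b, f b \in N2 b}.
  apply: hall => // Z sZ.
  have sN2 : NB N2 Z \subset X0.
    by apply/subsetP => x /bigcupP [b _]; rewrite inE => /andP [].
  pose X' := X0 :\: NB N2 Z.
  have sNX' : NB N X' \subset NB N X0 :\: Z.
    apply/subsetP => y /bigcupP [x]; rewrite !inE => /andP [xN2 xX0] exy.
    apply/andP; split; last by apply/bigcupP; exists x; rewrite ?inE.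
    apply/negP => yZ; case/negP: xN2; apply/bigcupP; exists y => //.
    by rewrite inE xX0.
  have := X0max X'; rewrite /g.
  have := cardsC (NB N X'); have := cardsC (NB N X0).
  have := subset_leq_card sNX'; rewrite cardsD (setIidPr sZ).
  rewrite /X' cardsD (setIidPr sN2).
  have := cT (NB N X0); have := cT (NB N X'); have := subset_leq_card sZ.
  have := subset_leq_card sN2.
  lia.
pose P1 := [set (x, f1 x) | x in ~: X0].
pose P2 := [set (f2 b, b) | b in NB N X0].
have f2X0 b : b \in NB N X0 -> f2 b \in X0.
  by move/f2N; rewrite inE => /andP [].
have f1NX x : x \in ~: X0 -> f1 x \notin NB N X0.
  by move/f1N => /setDP [].
exists (~: X0), (NB N X0), (P1 :|: P2); split.
- move=> x y exy; case: (boolP (x \in X0)) => xX; last by rewrite inE xX.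
  by apply/orP; right; apply/bigcupP; exists x => //; rewrite inE.
- move=> p /setUP [/imsetP [x xX ->] | /imsetP [b bN ->]] /=.
    by have := f1N x xX; rewrite !inE => /andP [].
  by have := f2N b bN; rewrite !inE => /andP [].
- move=> p q /setUP [/imsetP [x xX ->] | /imsetP [b bN ->]]
    /setUP [/imsetP [x' xX' ->] | /imsetP [b' bN' ->]] /=.
  + by move=> ->.
  + by move=> ex; have := f2X0 b' bN'; rewrite -ex; move: xX; rewrite inE => /negPf ->.
  + by move=> ex; have := f2X0 b bN; rewrite ex; move: xX'; rewrite inE => /negPf ->.
  + by move/f2i => -> //.
- move=> p q /setUP [/imsetP [x xX ->] | /imsetP [b bN ->]]
    /setUP [/imsetP [x' xX' ->] | /imsetP [b' bN' ->]] /=.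
  + by move/f1i => -> //.
  + by move=> ex; have := f1NX x xX; rewrite ex bN'.
  + by move=> ex; have := f1NX x' xX'; rewrite -ex bN.
  + by move=> ->.
- have dP : [disjoint P1 & P2].
    apply/pred0P => p /=; apply/negP => /andP [/imsetP [x xX ->] /imsetP [b bN [ex _]]].
    by have := f2X0 b bN; rewrite -ex; move: xX; rewrite inE => /negPf ->.
  have := leq_card_setU P1 P2; rewrite dP => -[_ /eqP ->].
  rewrite /P1 /P2 !card_in_imset //.
  + by move=> b b' _ _ [].
  + by move=> x x' _ _ [].
Qed.

Lemma disj_sum (I T : finType) (D : {set I}) (F : I -> {set T}) :
  {in D &, forall i j, i != j -> [disjoint F i & F j]} ->
  \sum_(i in D) #|F i| = #|\bigcup_(i in D) F i|.
Proof.
have [n] := ubnP #|D|; elim: n D => // n IH D ltD dF.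
case: (set_0Vmem D) => [-> | [i iD]]; first by rewrite !big_set0 cards0.
rewrite (big_setD1 _ iD) (big_setD1 _ iD) /=.
have dU : [disjoint F i & \bigcup_(j in D :\ i) F j].
  rewrite disjoint_sym; apply/pred0P => x /=; apply/negP => /andP [/bigcupP [j]].
  rewrite !inE => /andP [ji jD] xj xi.
  by move/disjointFr: (dF j i jD iD ji) => /(_ x xj); rewrite xi.
have := leq_card_setU (F i) (\bigcup_(j in D :\ i) F j); rewrite dU => -[_ /eqP ->].
rewrite IH //.
  by have := cardsD1 i D; rewrite iD; lia.
by move=> j k; rewrite !inE => /andP [_ jD] /andP [_ kD]; apply: dF.
Qed.

Section Main.
Variables (T : finType) (eG : rel T).

Lemma pairs_matching (P : {set T * T}) :
  (forall p, p \in P -> eG p.1 p.2) ->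
  {in P &, injective fst} -> {in P &, injective snd} ->
  #|P| <= matching_number (direct_prod eG K2).
Proof.
move=> eP i1 i2.
pose h (p : T * T) := [set (p.1, false); (p.2, true)].
have hinj : {in P &, injective h}.
  move=> p q pP qP hpq; apply: i1 => //.
  have : (p.1, false) \in h q by rewrite -hpq !inE eqxx.
  by rewrite !inE !xpair_eqE /= andbF orbF => /andP [/eqP].
rewrite -(card_in_imset hinj); apply: mn_ge; apply/matchingP; split.
  move=> f /imsetP [p pP ->]; apply/edgeP; exists (p.1, false), (p.2, true).
  by rewrite /direct_prod /K2 /= eP.
move=> f g /imsetP [p pP ->] /imsetP [q qP ->] nfg.
have npq : p != q by apply: contraNneq nfg => ->.
have n1 : p.1 != q.1 by apply: contraNneq npq => /i1 ->.
have n2 : p.2 != q.2 by apply: contraNneq npq => /i2 ->.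
apply/pred0P => v /=; rewrite !inE.
case: v => x c; rewrite !xpair_eqE.
case: c; rewrite ?andbF ?andbT ?orbF ?orFb.
  by apply/negP => /andP [/eqP -> /eqP]; apply/eqP.
by apply/negP => /andP [/eqP -> /eqP]; apply/eqP.
Qed.

Lemma LR_cover (L R : {set T}) : symmetric eG ->
  (forall x y, eG x y -> (x \in L) || (y \in R)) ->
  vertex_cover_number (direct_prod eG K2) <= #|L| + #|R|.
Proof.
move=> sym cLR.
pose S := [set (x, false) | x in L] :|: [set (x, true) | x in R].
apply: (leq_trans (@vcn_le _ _ S _)).
  apply/coverP => -[x c] [y d]; rewrite /direct_prod /K2 /= => /andP [exy].
  case: c; case: d => //= _; rewrite !inE.
  - have := cLR y x; rewrite sym exy => /(_ isT) /orP [yL | xR].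
      by rewrite orbC; apply/orP; left; apply/orP; left; apply: imset_f.
    by apply/orP; left; apply/orP; right; apply: imset_f.
  - have := cLR x y exy => /orP [xL | yR].
      by apply/orP; left; apply/orP; left; apply: imset_f.
    by apply/orP; right; apply/orP; right; apply: imset_f.
apply: (leq_trans (leq_card_setU _ _).1).
by rewrite !card_imset // => u v [].
Qed.

Lemma vcn_mn_K2 : simple_graph eG -> nonempty_graph eG ->
  vertex_cover_number (direct_prod eG K2) = matching_number (direct_prod eG K2).
Proof.
move=> [sym irr] [x0 _].
have [L [R [P [cLR eP i1 i2 card]]]] := konig x0 eG.
apply/eqP; rewrite eqn_leq; apply/andP; split.
  apply: (leq_trans (LR_cover sym cLR)); apply: (leq_trans card).
  exact: pairs_matching.
have [M mM ->] := mn_attained (direct_prod eG K2).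
have [S cS leS] := vcn_attained (direct_prod eG K2).
exact: leq_trans (cover_matching cS mM) leS.
Qed.

Lemma double_matching : simple_graph eG ->
  2 * matching_number eG <= matching_number (direct_prod eG K2).
Proof.
move=> [sym irr].
have [MG /matchingP [eM dM] ->] := mn_attained eG.
pose P := [set p : T * T | eG p.1 p.2 && ([set p.1; p.2] \in MG)].
have Pin p : p \in P -> eG p.1 p.2 /\ [set p.1; p.2] \in MG.
  by rewrite inE => /andP.
have key x y z : [set x; y] \in MG -> [set x; z] \in MG -> eG x y -> eG x z -> y = z.
  move=> fM gM exy exz.
  case: (eqVneq [set x; y] [set x; z]) => [e | ne].
    have : y \in [set x; z] by rewrite -e !inE eqxx orbT.
    rewrite !inE => /orP [/eqP yx | /eqP //].
    by move: exy; rewrite yx irr.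
  by move/disjointFr: (dM _ _ fM gM ne) => /(_ x); rewrite !inE eqxx => /(_ isT).
have i1 : {in P &, injective fst}.
  move=> [x y] [x' y'] /Pin [/= e1 f1] /Pin [/= e2 f2] /= ex; subst x'.
  by rewrite (key x y y').
have i2 : {in P &, injective snd}.
  move=> [x y] [x' y'] /Pin [/= e1 f1] /Pin [/= e2 f2] /= ey; subst y'.
  rewrite setUC in f1; rewrite setUC in f2.
  by rewrite (key y x x') // sym.
apply: leq_trans (pairs_matching (fun p pP => (Pin p pP).1) i1 i2).
have -> : #|P| = #|fst @: P| by rewrite card_in_imset.
have -> : fst @: P = cover MG.
  apply/setP => v; apply/imsetP/bigcupP.
    move=> [p /Pin [_ pM] ->]; exists [set p.1; p.2] => //; by rewrite !inE eqxx.
  move=> [f fM vf]; case/edgeP: (eM f fM) => a [b [eab ef]].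
  move: vf; rewrite ef !inE => /orP [/eqP -> | /eqP ->].
    by exists (a, b) => //; rewrite inE eab -ef fM.
  by exists (b, a) => //; rewrite inE /= sym eab setUC -ef fM.
have := leq_card_cover MG.
have -> : trivIset MG by apply/trivIsetP => f g fM gM; apply: dM.
move=> [_ /eqP ->].
rewrite (eq_bigr (fun _ => 2)) ?sum_nat_const 1?mulnC //.
move=> f fM; case/edgeP: (eM f fM) => a [b [eab ->]].
rewrite cards2; case: eqVneq => // ab; by move: eab; rewrite ab irr.
Qed.

Variables (U : finType) (eH : rel U).

Lemma block_bound (S : {set T * U}) a b :
  is_vertex_cover (direct_prod eG eH) S -> symmetric eH -> eH a b -> a != b ->
  vertex_cover_number (direct_prod eG K2) <= #|[set p in S | p.2 \in [set a; b]]|.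
Proof.
move=> /coverP cS sym eab nab.
pose phi (c : bool) := if c then b else a.
pose S' := [set v : T * bool | (v.1, phi v.2) \in S].
apply: (leq_trans (@vcn_le _ _ S' _)).
  apply/coverP => -[x c] [y d]; rewrite /direct_prod /K2 /= => /andP [exy ncd].
  rewrite !inE /=; apply: cS; rewrite /direct_prod /= exy /=.
  by case: c ncd; case: d => //= _; rewrite // sym.
pose h (v : T * bool) := (v.1, phi v.2).
have hinj : injective h.
  move=> [x c] [y d] [-> e]; congr (_, _).
  by move: e; rewrite /phi; case: c; case: d => // e; move: nab; rewrite e eqxx.
rewrite -(card_imset S' hinj); apply: subset_leq_card; apply/subsetP => p.
case/imsetP => -[x c]; rewrite inE /= => xS ->; rewrite inE xS /= !inE.
by rewrite /phi; case: (c) => /=; rewrite eqxx ?orbT.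
Qed.

Lemma part1 : symmetric eH -> irreflexive eH ->
  matching_number eH * vertex_cover_number (direct_prod eG K2)
    <= vertex_cover_number (direct_prod eG eH).
Proof.
move=> sym irr.
have [S cS leS] := vcn_attained (direct_prod eG eH).
apply: leq_trans leS.
have [MH /matchingP [eM dM] ->] := mn_attained eH.
pose B (f : {set U}) := [set p in S | p.2 \in f].
apply: (@leq_trans (\sum_(f in MH) #|B f|)).
  rewrite -sum_nat_const; apply: leq_sum => f fM.
  case/edgeP: (eM f fM) => a [b [eab ->]]; apply: block_bound => //.
  by apply: contraTneq eab => ->; rewrite irr.
rewrite disj_sum.
  apply: subset_leq_card; apply/subsetP => p /bigcupP [f _].
  by rewrite inE => /andP [].
move=> f g fM gM nfg; apply/pred0P => p /=; rewrite !inE.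
apply/negP => /andP [/andP [_ pf] /andP [_ pg]].
by move/disjointFr: (dM f g fM gM nfg) => /(_ _ pf); rewrite pg.
Qed.

End Main.

Theorem lemma18 (T U : finType) (eG : rel T) (eH : rel U) :
  simple_graph eG -> simple_graph eH ->
  nontrivial_graph T -> nontrivial_graph U ->
  nonempty_graph eG -> nonempty_graph eH ->
  [/\ matching_number eH * vertex_cover_number (direct_prod eG K2)
        <= vertex_cover_number (direct_prod eG eH),
      matching_number eH * vertex_cover_number (direct_prod eG K2)
        = matching_number eH * matching_number (direct_prod eG K2)
    & 2 * matching_number eG * matching_number eH
        <= matching_number eH * matching_number (direct_prod eG K2)].
Proof.
move=> sG [symH irrH] _ _ neG _; split.
- exact: part1.
- by rewrite vcn_mn_K2.
- by rewrite mulnC; apply: leq_mul => //; apply: double_matching.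
Qed.
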